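(* Let $n\geq 5$, let $S$ be the set of all $3$-cycles in $S_n$, let $CAG_n=\mathrm{Cay}(A_n,S)$, and let $G_e$ be the stabilizer of the identity vertex $e$ in $\mathrm{Aut}(CAG_n)$. For $1\leq i<j<k\leq n$ put $\Delta_{i,j,k}=\{(i,j,k),(i,k,j)\}$ and $\Delta=\{\Delta_{i,j,k}\mid 1\leq i<j<k\leq n\}$. Each $g\in G_e$ permutes the members of $\Delta$, giving an action of $G_e$ on $\Delta$; let $K$ be the kernel of this action. Then $|K|\leq 2$.
   Context: For a finite group $\Gamma$ and a subset $T\subseteq\Gamma$ with $e\notin T$ and $T=T^{-1}$, the Cayley graph $\mathrm{Cay}(\Gamma,T)$ is the undirected graph with vertex set $\Gamma$ and edge set $\{\{\gamma,t\gamma\}\mid \gamma\in\Gamma, t\in T\}$. Elements of $G_e$ map $S$ (the neighbourhood of $e$) to itself. *)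

(* Defs.v *)
From mathcomp Require Import all_boot all_fingroup all_solvable.
Set Implicit Arguments. Unset Strict Implicit. Unset Printing Implicit Defensive.
Local Open Scope group_scope.

Definition is_cyc3 (n : nat) (s : {perm 'I_n}) (i j k : 'I_n) : bool :=
  [&& i != j, j != k, i != k,
      s i == j, s j == k, s k == i &
      [forall x, (x \notin [:: i; j; k]) ==> (s x == x)]].

Definition three_cycles (n : nat) : {set {perm 'I_n}} :=
  [set s | [exists i, exists j, exists k, is_cyc3 s i j k]].

Definition vert (n : nat) := {x : {perm 'I_n} | x \in Alt 'I_n}.

Definition vid (n : nat) : vert n := exist _ 1 (group1 _).

(* adjacency in Cay(A_n, S): y = t x for some t in S
   (mathcomp product x * t means "x then t", i.e. t o x) *)
Definition adj (n : nat) (x y : vert n) : bool :=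
  (val x)^-1 * val y \in three_cycles n.

Definition AutCAG (n : nat) : {set {perm vert n}} :=
  [set g : {perm vert n} | [forall x : vert n, forall y : vert n, adj (g x) (g y) == adj x y]].

Definition Ge (n : nat) : {set {perm vert n}} :=
  [set g in AutCAG n | g (vid n) == vid n].

Definition Delta (n : nat) (i j k : 'I_n) : {set vert n} :=
  [set x : vert n | is_cyc3 (val x) i j k || is_cyc3 (val x) i k j].

Definition Kker (n : nat) : {set {perm vert n}} :=
  [set g in Ge n | [forall i : 'I_n, forall j : 'I_n, forall k : 'I_n,
      ((i < j) && (j < k))%N ==> (g @: Delta i j k == Delta i j k)]].

(* Main.v *)
Require Import Defs.
From mathcomp Require Import all_boot all_fingroup all_solvable zify.
Set Implicit Arguments. Unset Strict Implicit. Unset Printing Implicit Defensive.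
Local Open Scope group_scope.

Local Open Scope group_scope.

Section Cyc.
Variable n : nat.
Implicit Types (s t : {perm 'I_n}) (i j k x : 'I_n).

Definition c3 i j k x := if x == i then j else if x == j then k else if x == k then i else x.
Lemma uniq3 i j k : uniq [:: i; j; k] -> [/\ i != j, i != k & j != k].
Proof. by rewrite /= !inE negb_or => /andP[/andP[-> ->] /andP[-> _]]. Qed.

Definition mk3 i j k : {perm 'I_n} := tperm i j * tperm i k.

Lemma mk3E i j k x : uniq [:: i; j; k] -> mk3 i j k x = c3 i j k x.
Proof.
rewrite /= !inE negb_or => /andP[/andP[ij ik] /andP[jk _]]; rewrite permM /c3.
case: (x =P i) => [->|/eqP xi]; first by rewrite tpermL tpermD // eq_sym.
case: (x =P j) => [->|/eqP xj]; first by rewrite tpermR tpermL.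
case: (x =P k) => [->|/eqP xk]; first by rewrite (tpermD ik) ?tpermR // eq_sym.
by rewrite !tpermD // eq_sym.
Qed.

Lemma cyc3P s i j k : is_cyc3 s i j k ->
  [/\ uniq [:: i; j; k], s i = j, s j = k, s k = i &
      forall x, x \notin [:: i; j; k] -> s x = x].
Proof.
case/and5P=> ij jk ik /eqP si /andP[/eqP sj /andP[/eqP sk /forallP fx]].
split=> //; first by rewrite /= !inE negb_or ij ik jk.
by move=> x xn; apply/eqP; move/implyP: (fx x); apply.
Qed.

Lemma cyc3_c3 s i j k : is_cyc3 s i j k -> forall x, s x = c3 i j k x.
Proof.
case/cyc3P=> _ si sj sk fx x; rewrite /c3.
case: (x =P i) => [->|/eqP xi] //; case: (x =P j) => [->|/eqP xj] //.
case: (x =P k) => [->|/eqP xk] //; apply: fx; by rewrite !inE !negb_or xi xj xk.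
Qed.

Lemma mk3_cyc i j k : uniq [:: i; j; k] -> is_cyc3 (mk3 i j k) i j k.
Proof.
move=> u; move: (u); rewrite /= !inE negb_or => /andP[/andP[ij ik] /andP[jk _]].
have ji : (j == i) = false by rewrite eq_sym (negbTE ij).
have ki : (k == i) = false by rewrite eq_sym (negbTE ik).
have kj : (k == j) = false by rewrite eq_sym (negbTE jk).
rewrite /is_cyc3 ij jk ik !mk3E // /c3 !eqxx ji ki kj !eqxx /=.
apply/forallP=> x; apply/implyP; rewrite !inE !negb_or => /and3P[xi xj xk].
by rewrite mk3E // /c3 (negbTE xi) (negbTE xj) (negbTE xk).
Qed.

Lemma cyc3_mk3 s i j k : is_cyc3 s i j k -> s = mk3 i j k.
Proof.
move=> H; case/cyc3P: (H) => u _ _ _ _; apply/permP=> x.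
by rewrite (cyc3_c3 H) mk3E.
Qed.

Lemma cyc3_rot s i j k : is_cyc3 s i j k -> is_cyc3 s j k i.
Proof.
case/cyc3P=> u si sj sk fx; move: (u); rewrite /= !inE !negb_or => /andP[/andP[ij ik] /andP[jk _]].
rewrite /is_cyc3 jk (eq_sym k) ik (eq_sym j) ij si sj sk !eqxx /=.
apply/forallP=> x; apply/implyP=> xn; rewrite fx //.
by move: xn; rewrite !inE !negb_or => /and3P[-> -> ->].
Qed.

Lemma three_cyclesP s :
  reflect (exists i j k, is_cyc3 s i j k) (s \in three_cycles n).
Proof.
rewrite inE; apply: (iffP existsP) => [[i /existsP[j /existsP[k H]]]|[i [j [k H]]]].
  by exists i, j, k.
by exists i; apply/existsP; exists j; apply/existsP; exists k.
Qed.

Lemma cyc3_inv s i j k : is_cyc3 s i j k -> is_cyc3 s^-1 i k j.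
Proof.
case/cyc3P=> u si sj sk fx; move: (u); rewrite /= !inE !negb_or => /andP[/andP[ij ik] /andP[jk _]].
have E y z : s y = z -> s^-1 z = y by move=> <-; rewrite permK.
rewrite /is_cyc3 ik (eq_sym k) jk ij (E _ _ sk) (E _ _ sj) (E _ _ si) !eqxx /=.
apply/forallP=> x; apply/implyP=> xn; apply/eqP; apply: E; apply: fx.
by move: xn; rewrite !inE !negb_or => /and3P[-> -> ->].
Qed.

Lemma S_inv s : s \in three_cycles n -> s^-1 \in three_cycles n.
Proof. case/three_cyclesP=> i [j [k H]]; apply/three_cyclesP; exists i, k, j; exact: cyc3_inv. Qed.

Lemma cyc3_conj s i j k (g : {perm 'I_n}) : is_cyc3 s i j k -> is_cyc3 (s ^ g) (g i) (g j) (g k).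
Proof.
case/cyc3P=> u si sj sk fx; move: (u); rewrite /= !inE !negb_or => /andP[/andP[ij ik] /andP[jk _]].
rewrite /is_cyc3 !(inj_eq perm_inj) ij jk ik !permJ si sj sk !eqxx /=.
apply/forallP=> x; apply/implyP=> xn; rewrite -{1 2}(permKV g x) permJ fx //.
move: xn; rewrite !inE !negb_or -{1}(permKV g x) -{2}(permKV g x) -{3}(permKV g x) !(inj_eq perm_inj).
by move=> /and3P[-> -> ->].
Qed.

Lemma S_conj s g : s \in three_cycles n -> s ^ g \in three_cycles n.
Proof. case/three_cyclesP=> i [j [k H]]; apply/three_cyclesP; exists (g i), (g j), (g k); exact: cyc3_conj. Qed.

Lemma S_alt s : s \in three_cycles n -> s \in Alt 'I_n.
Proof.
case/three_cyclesP=> i [j [k H]]; case/cyc3P: (H) => /uniq3[ij ik _] _ _ _ _.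
by rewrite (cyc3_mk3 H) Alt_even /mk3 odd_permM !odd_tperm ij ik.
Qed.

End Cyc.

Local Open Scope group_scope.

Lemma gen_S n : (5 <= n)%N -> <<three_cycles n>> = Alt 'I_n.
Proof.
move=> n5.
have sub : three_cycles n \subset Alt 'I_n by apply/subsetP => s; apply: S_alt.
have nrm : Alt 'I_n \subset 'N(three_cycles n).
  apply/subsetP => g _; rewrite inE; apply/subsetP => y; rewrite mem_conjg => Hy.
  by rewrite -(conjgKV g y) S_conj.
have nH : <<three_cycles n>>%G <| Alt 'I_n.
  by rewrite /normal gen_subG sub norms_gen.
have n0 : (0 < n)%N by apply: leq_trans n5.
have n1 : (1 < n)%N by apply: leq_trans n5.
have n2 : (2 < n)%N by apply: leq_trans n5.
pose i0 := Ordinal n0; pose i1 := Ordinal n1; pose i2 := Ordinal n2.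
have u : uniq [:: i0; i1; i2] by [].
have c5 : (5 <= #|'I_n|)%N by rewrite card_ord.
case/simpleP: (simple_Alt5 c5) => _ /(_ _ nH) [H1|->] //.
have : mk3 i0 i1 i2 \in <<three_cycles n>>.
  by apply: mem_gen; apply/three_cyclesP; exists i0, i1, i2; apply: mk3_cyc.
rewrite H1 inE => /eqP E.
have := mk3E i0 u; rewrite E perm1 /c3 eqxx => /(congr1 val) //.
Qed.

Local Open Scope group_scope.

Section Vert.
Variable n : nat.
Notation V := (vert n).
Notation S := (three_cycles n).

Definition vmul (x y : V) : V := exist _ (val x * val y) (groupM (valP x) (valP y)).
Definition vinv (x : V) : V := exist _ (val x)^-1 (groupVr (valP x)).
Definition vS (s : {perm 'I_n}) (H : s \in S) : V := exist _ s (S_alt H).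

Lemma vinj (x y : V) : val x = val y -> x = y.
Proof. exact: val_inj. Qed.

Definition preserves (F : V -> V) := forall x y, adj (F x) (F y) = adj x y.

Definition core_prop :=
  forall G : V -> V, preserves G -> G (vid n) = vid n ->
    (forall x, val x \in S -> G x = x) ->
    forall x y, val x \in S -> val y \in S -> G (vmul x y) = vmul x y.

Lemma fix_all (Hcore : core_prop) (n5 : (5 <= n)%N) (F : V -> V) :
  preserves F -> F (vid n) = vid n -> (forall x, val x \in S -> F x = x) ->
  forall x, F x = x.
Proof.
move=> pF Fe FS.
pose P x := F x = x /\ forall y, val y \in S -> F (vmul x y) = vmul x y.
have step x t : P x -> val t \in S -> P (vmul x t).
  case=> Fx Fxy tS; split; first exact: Fxy.
  pose G v := vmul (vinv x) (F (vmul x v)).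
  have pG : preserves G.
    move=> v w; rewrite /G /adj /= invMg invgK !mulgA mulgK.
    by have := pF (vmul x v) (vmul x w); rewrite /adj /= invMg !mulgA mulgKV.
  have Ge : G (vid n) = vid n.
    apply: vinj; rewrite /G /=.
    have -> : vmul x (vid n) = x by apply: vinj; rewrite /= mulg1.
    by rewrite Fx mulVg.
  have GS v : val v \in S -> G v = v.
    by move=> vS; apply: vinj; rewrite /G Fxy //= mulKg.
  move=> y yS.
  have := Hcore G pG Ge GS t y tS yS; rewrite /G => /(congr1 val) /=.
  move=> E; apply: vinj; rewrite /=.
  have -> : vmul (vmul x t) y = vmul x (vmul t y) by apply: vinj; rewrite /= mulgA.
  by rewrite -mulgA -E mulKVg.
have allP : forall k (c : 'I_k -> {perm 'I_n}), (forall i, c i \in S) ->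
   forall x : V, val x = \prod_(i < k) c i -> P x.
  elim=> [|k IH] c cS x.
    rewrite big_ord0 => x1.
    have -> : x = vid n by apply: vinj.
    split=> // y yS.
    have -> : vmul (vid n) y = y by apply: vinj; rewrite /= mul1g.
    exact: FS.
  rewrite big_ord_recr /= => xE.
  pose p := \prod_(i < k) c (widen_ord (leqnSn k) i).
  have pA : p \in Alt 'I_n.
    by apply: group_prod => i _; apply: S_alt.
  have := IH (fun i => c (widen_ord (leqnSn k) i)) (fun i => cS _) (exist _ p pA) erefl.
  move/step => /(_ (vS (cS ord_max)) (cS ord_max)).
  by have -> : vmul (exist _ p pA) (vS (cS ord_max)) = x by apply: vinj.
move=> x.
have : val x \in <<S>> by rewrite gen_S // (valP x).
case/gen_prodgP => k [c cS xE].
by case: (allP k c cS x xE).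
Qed.

End Vert.

Local Open Scope group_scope.

Section Push.
Variables (n m : nat) (l : m.-tuple 'I_n).
Hypothesis ul : uniq l.
Definition phi (y : 'I_m) : 'I_n := tnth l y.

Lemma phi_inj : injective phi.
Proof.
move=> y z; have x0 := tnth l y; rewrite /phi !(tnth_nth x0) => /eqP.
by rewrite nth_uniq ?size_tuple // => /eqP /val_inj.
Qed.

Definition pushf (p : {perm 'I_m}) (x : 'I_n) : 'I_n :=
  if [pick y | phi y == x] is Some y then phi (p y) else x.

Lemma pushf_phi p y : pushf p (phi y) = phi (p y).
Proof.
rewrite /pushf; case: pickP => [z /eqP /phi_inj -> //|H].
by move: (H y); rewrite eqxx.
Qed.

Lemma pushf_out p x : (forall y, phi y != x) -> pushf p x = x.
Proof.
move=> H; rewrite /pushf; case: pickP => [z /eqP E|//].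
by move: (H z); rewrite E eqxx.
Qed.

Lemma pushf_inj p : injective (pushf p).
Proof.
move=> x1 x2; case: (pickP (fun y => phi y == x1)) => [y1 /eqP <-|H1];
case: (pickP (fun y => phi y == x2)) => [y2 /eqP <-|H2].
- by rewrite !pushf_phi => /phi_inj /perm_inj ->.
- rewrite pushf_phi pushf_out => [E|y]; last by rewrite H2.
  by move: (H2 (p y1)); rewrite E eqxx.
- rewrite pushf_phi pushf_out => [E|y]; last by rewrite H1.
  by move: (H1 (p y2)); rewrite -E eqxx.
- by rewrite !pushf_out // => y; rewrite ?H1 ?H2.
Qed.

Definition push p : {perm 'I_n} := perm (@pushf_inj p).

Lemma push_phi p y : push p (phi y) = phi (p y).
Proof. by rewrite permE pushf_phi. Qed.

Lemma push_out p x : (forall y, phi y != x) -> push p x = x.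
Proof. by move=> H; rewrite permE pushf_out. Qed.

Lemma push_cases x : (exists y, x = phi y) \/ (forall y, phi y != x).
Proof.
case: (pickP (fun y => phi y == x)) => [y /eqP <-|H]; first by left; exists y.
by right=> y; rewrite H.
Qed.

Lemma pushM p q : push (p * q) = push p * push q.
Proof.
apply/permP => x; rewrite permM.
case: (push_cases x) => [[y ->]|H]; first by rewrite !push_phi permM.
by rewrite !push_out.
Qed.

Lemma push_inj : injective push.
Proof.
move=> p q E; apply/permP => y; apply: phi_inj.
by rewrite -!push_phi E.
Qed.

Lemma push_cyc3 p a b c :
  is_cyc3 (push p) (phi a) (phi b) (phi c) = is_cyc3 p a b c.
Proof.
have F : [forall x, (x \notin [:: phi a; phi b; phi c]) ==> (push p x == x)] =
         [forall y, (y \notin [:: a; b; c]) ==> (p y == y)].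
  apply/forallP/forallP => H x.
  apply/implyP; rewrite !inE => xn; have := H (phi x).
  by rewrite !inE push_phi !(inj_eq phi_inj) xn.
apply/implyP => xn; case: (push_cases x) => [[y E]|Hx]; last by rewrite push_out.
move: xn; rewrite E push_phi (inj_eq phi_inj) !inE !(inj_eq phi_inj) => xn.
by have := H y; rewrite !inE xn.
by rewrite /is_cyc3 F !(inj_eq phi_inj) !push_phi !(inj_eq phi_inj).
Qed.

Lemma pushS p : (push p \in three_cycles n) = (p \in three_cycles m).
Proof.
apply/three_cyclesP/three_cyclesP => [[i [j [k H]]]|[a [b [c H]]]]; last first.
  by exists (phi a), (phi b), (phi c); rewrite push_cyc3.
case/cyc3P: (H) => /uniq3[ij ik jk] si sj sk _.
case: (push_cases i) => [[a ia]|Hi]; last by move: ij; rewrite -si push_out ?eqxx.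
have jb : j = phi (p a) by rewrite -si ia push_phi.
have kc : k = phi (p (p a)) by rewrite -sj jb push_phi.
by exists a, (p a), (p (p a)); rewrite -push_cyc3 -ia -jb -kc.
Qed.

Lemma push_mk3 a b c : uniq [:: a; b; c] ->
  push (mk3 a b c) = mk3 (phi a) (phi b) (phi c).
Proof. by move=> u; apply: cyc3_mk3; rewrite push_cyc3; apply: mk3_cyc. Qed.

End Push.

Local Close Scope group_scope.

Fixpoint lhas T (p : T -> bool) (s : seq T) : bool :=
  match s with [::] => false | x :: s' => if p x then true else lhas p s' end.
Fixpoint lall T (p : T -> bool) (s : seq T) : bool :=
  match s with [::] => true | x :: s' => if p x then lall p s' else false end.
Lemma lhasE T p s : @lhas T p s = has p s.
Proof. by elim: s => //= x s ->; case: (p x). Qed.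
Lemma lallE T p s : @lall T p s = all p s.
Proof. by elim: s => //= x s ->; case: (p x). Qed.

Section C.
Variable m : nat.
Definition ntrip := (nat * nat * nat)%type.
Definition c3f (a b c x : nat) := if x == a then b else if x == b then c else if x == c then a else x.
Definition c3n (T : ntrip) : seq nat := map (c3f T.1.1 T.1.2 T.2) (iota 0 m).
Definition tinv (T : ntrip) : ntrip := (T.1.1, T.2, T.1.2).
Definition compn (p q : seq nat) := map (fun x => nth 0 q x) p.
Definition allt : seq ntrip :=
  [seq (a, bc.1, bc.2) | a <- iota 0 m, bc <- [seq (b, c) | b <- iota 0 m, c <- iota 0 m]].
Definition canon : seq ntrip :=
  filter (fun T : ntrip => [&& T.1.1 < T.1.2, T.1.1 < T.2 & T.1.2 != T.2]) allt.
Definition cycl (p : seq nat) :=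
  lhas (fun i => let j := nth 0 p i in let k := nth 0 p j in
     if i == j then false else if j == k then false else if i == k then false else
     if nth 0 p k == i then
       lall (fun x => if x == i then true else if x == j then true else if x == k then true
                      else nth 0 p x == x) (iota 0 m)
     else false) (iota 0 m).
Definition isinv (p : seq nat) := lall (fun x => nth 0 p (nth 0 p x) == x) (iota 0 m).
Definition distB (w w' : seq nat) :=
  lhas (fun U => lhas (fun U' =>
     if isinv (compn (c3n U) (c3n U')) then false else
     let zi := compn (c3n (tinv U')) (c3n (tinv U)) in
     cycl (compn zi w) != cycl (compn zi w')) canon) canon.
Definition sigw (us : seq (seq nat)) (w : seq nat) :=
  cycl w :: map (fun u => cycl (compn u w)) us.
Definition checkA (ul : seq ntrip) :=
  let s := c3n (0,1,2) in
  let us := map c3n ul in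
  let data := map (fun T => let w := compn s (c3n T) in (w, sigw us w)) canon in
  if lall (fun U => U \in canon) ul then
  lall (fun d => lall (fun d' =>
     if d.1 == d'.1 then true else if d.2 != d'.2 then true else
     if isinv d.1 then distB d.1 d'.1 else false) data) data
  else false.
Definition forced (C X : ntrip) :=
  cycl (compn (c3n (tinv C)) (c3n X)) != cycl (compn (c3n (tinv C)) (c3n (tinv X))).
Definition checkB (cert : seq (ntrip * ntrip * ntrip)) :=
  lall (fun D => lhas (fun c =>
     if c.1.1 == D then
     if c.1.2 \in canon then if c.2 \in canon then
     if forced (0,1,2) c.1.2 then (if forced c.1.2 c.2 then forced c.2 D else false) else false
     else false else false else false) cert) canon.

Local Open Scope group_scope.
Notation S := (three_cycles m).

Definition Lrep (P : {perm 'I_m}) (L : seq nat) :=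
  size L = m /\ forall x : 'I_m, nth 0 L x = P x.

Lemma all_iota (q : nat -> bool) : all q (iota 0 m) = [forall x : 'I_m, q x].
Proof.
apply/allP/forallP => [H x|H x]; first by apply: H; rewrite mem_iota /= add0n ltn_ord.
rewrite mem_iota /= add0n => xm; exact: (H (Ordinal xm)).
Qed.
Lemma has_iota (q : nat -> bool) : has q (iota 0 m) = [exists x : 'I_m, q x].
Proof.
apply/hasP/existsP => [[x xm H]|[x H]]; last first.
  by exists (val x) => //; rewrite mem_iota /= add0n ltn_ord.
by move: xm; rewrite mem_iota /= add0n => xm; exists (Ordinal xm).
Qed.

Lemma Lrep_mul P Q p q : Lrep P p -> Lrep Q q -> Lrep (P * Q) (compn p q).
Proof.
case=> sp Hp [sq Hq]; split; first by rewrite size_map.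
by move=> x; rewrite (nth_map 0) ?sp // Hp Hq permM.
Qed.

Lemma Lrep_c3 (a b c : 'I_m) : uniq [:: a; b; c] ->
  Lrep (mk3 a b c) (c3n (val a, val b, val c)).
Proof.
move=> u; split; first by rewrite size_map size_iota.
move=> x; rewrite (nth_map 0) ?size_iota // nth_iota // add0n mk3E // /c3 /c3f.
by rewrite -!val_eqE; do !case: ifP.
Qed.

Lemma Lrep_eq P Q p q : Lrep P p -> Lrep Q q -> (p == q) = (P == Q).
Proof.
case=> sp Hp [sq Hq]; apply/eqP/eqP => [E|E].
  by apply/permP => x; apply: ord_inj; rewrite -Hp -Hq E.
move: Hp; rewrite E => Hp.
apply: (@eq_from_nth _ 0); first by rewrite sp sq.
by move=> i; rewrite sp => im; have := Hp (Ordinal im); have := Hq (Ordinal im) => /= -> ->.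
Qed.

Lemma Lrep_isinv P p : Lrep P p -> isinv p = (P * P == 1).
Proof.
case=> sp Hp; rewrite /isinv lallE all_iota.
apply/forallP/eqP => [H|E x]; last first.
  by rewrite !Hp -permM E perm1.
apply/permP => x; apply: ord_inj; rewrite permM perm1 -!Hp; exact/eqP/H.
Qed.

Lemma oeq (x y : 'I_m) : (nat_of_ord x == nat_of_ord y) = (x == y).
Proof. by []. Qed.

Lemma Lrep_cycl P p : Lrep P p -> cycl p = (P \in S).
Proof.
case=> sp Hp; rewrite /cycl lhasE has_iota.
apply/existsP/three_cyclesP => [[i]|[i [j [k H]]]].
  rewrite /= !Hp !oeq.
  case: ifP => // ij; case: ifP => // jk; case: ifP => // ik.
  case: ifP => // ki; rewrite lallE all_iota => /forallP H.
  exists i, (P i), (P (P i)); rewrite /is_cyc3 ij jk ik ki !eqxx /=.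
  apply/forallP => x; apply/implyP; rewrite !inE !negb_or => /and3P[xi xj xk].
  by have := H x; rewrite !oeq (negbTE xi) (negbTE xj) (negbTE xk) Hp oeq.
case/cyc3P: (H) => /uniq3[ij ik jk] si sj sk fx.
exists i; rewrite /= !Hp si sj sk !oeq (negbTE ij) (negbTE jk) (negbTE ik) eqxx.
rewrite lallE all_iota; apply/forallP => x; rewrite !oeq.
case: ifP => // xi; case: ifP => // xj; case: ifP => // xk.
by rewrite Hp fx ?eqxx // !inE xi xj xk.
Qed.


Lemma canonP U : U \in canon -> exists a b c : 'I_m, U = (val a, val b, val c) /\ uniq [:: a; b; c].
Proof.
rewrite mem_filter => /andP[/and3P[ab ac bc]] /allpairsP[[a bc'] [/= ai bci E]].
move: bci => /allpairsP[[b c] [/= bi ci E']].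
move: ai bi ci; rewrite !mem_iota /= !add0n => ai bi ci.
exists (Ordinal ai), (Ordinal bi), (Ordinal ci); rewrite E E' /=; split => //.
move: ab ac bc; rewrite E E' /= => ab ac bc.
rewrite /= !inE negb_or -!oeq /= (ltn_eqF ab) (ltn_eqF ac) /=.
by rewrite andbT.
Qed.

Lemma mem_canon (a b c : 'I_m) : val a < val b -> val a < val c -> b != c ->
  (val a, val b, val c) \in canon.
Proof.
move=> ab ac bc; rewrite mem_filter /= ab ac bc /=.
apply/allpairsP; exists (val a, (val b, val c)); split => //=.
  by rewrite mem_iota /= add0n ltn_ord.
apply/allpairsP; exists (val b, val c); split => //=; by rewrite mem_iota /= add0n ltn_ord.
Qed.

Lemma mk3_inv (a b c : 'I_m) : uniq [:: a; b; c] -> (mk3 a b c)^-1 = mk3 a c b.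
Proof. by move=> u; apply: cyc3_mk3; apply: cyc3_inv; apply: mk3_cyc. Qed.

Lemma canon_rep U : U \in canon ->
  exists P, [/\ P \in S, Lrep P (c3n U) & Lrep P^-1 (c3n (tinv U))].
Proof.
case/canonP => a [b [c [-> u]]]; exists (mk3 a b c); split.
- by apply/three_cyclesP; exists a, b, c; apply: mk3_cyc.
- exact: Lrep_c3.
rewrite mk3_inv //; apply: Lrep_c3.
by case/uniq3: u => ab ac bc; rewrite /= !inE negb_or ac ab eq_sym bc.
Qed.

Lemma trip_rep (a b c : 'I_m) : uniq [:: a; b; c] -> val a < val b -> val a < val c ->
  exists U, U \in canon /\ Lrep (mk3 a b c) (c3n U).
Proof.
move=> u ab ac; exists (val a, val b, val c); split; last exact: Lrep_c3.
by apply: mem_canon => //; case/uniq3: u.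
Qed.

End C.

Section Conc.
Local Open Scope group_scope.
Definition concA n (w w' : {perm 'I_n}) : Prop :=
  (w \in three_cycles n) != (w' \in three_cycles n) \/
  (exists u, u \in three_cycles n /\ (u * w \in three_cycles n) != (u * w' \in three_cycles n)) \/
  (w * w == 1 /\ exists A B, [/\ A \in three_cycles n, B \in three_cycles n, (A * B) * (A * B) != 1 &
       ((A * B)^-1 * w \in three_cycles n) != ((A * B)^-1 * w' \in three_cycles n)]).
Definition forcedP n (C X : {perm 'I_n}) :=
  (C^-1 * X \in three_cycles n) != (C^-1 * X^-1 \in three_cycles n).
End Conc.

Section Sound.
Local Open Scope group_scope.
Variable m : nat.
Variables (i0 i1 i2 : 'I_m).
Hypotheses (v0 : val i0 = 0%N) (v1 : val i1 = 1%N) (v2 : val i2 = 2%N).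

Let u012 : uniq [:: i0; i1; i2].
Proof. by rewrite /= !inE -!oeq v0 v1 v2. Qed.
Let L012 : Lrep (mk3 i0 i1 i2) (c3n m (0, 1, 2)%N).
Proof. have -> : (0, 1, 2)%N = (val i0, val i1, val i2) by rewrite v0 v1 v2.
exact: Lrep_c3. Qed.

Lemma map_neq (T1 T2 : eqType) (f g : T1 -> T2) s :
  map f s != map g s -> exists2 x, x \in s & f x != g x.
Proof.
move=> H; case: (boolP (has (fun x => f x != g x) s)) => [/hasP[x xs fx]|/hasPn H'].
  by exists x.
move/negP: H => H; exfalso; apply: H; apply/eqP/eq_in_map => x xs.
by move: (H' x xs); rewrite negbK => /eqP.
Qed.

Lemma checkA_sound ul : checkA m ul -> forall (t t' : {perm 'I_m}) T T',
  T \in canon m -> T' \in canon m -> Lrep t (c3n m T) -> Lrep t' (c3n m T') ->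
  mk3 i0 i1 i2 * t != mk3 i0 i1 i2 * t' -> concA (mk3 i0 i1 i2 * t) (mk3 i0 i1 i2 * t').
Proof.
move=> chk t t' T T' Tc T'c Lt Lt' ne.
move: chk; rewrite /checkA; case: ifP => // /(fun h => h) ulc; move: ulc.
rewrite lallE => /allP ulc.
rewrite lallE => /allP H.
pose dataf := fun T0 : ntrip => (compn (c3n m (0,1,2)%N) (c3n m T0),
   sigw m (map (c3n m) ul) (compn (c3n m (0,1,2)%N) (c3n m T0))).
have := H (dataf T) (map_f dataf Tc).
rewrite lallE => /allP /(_ (dataf T') (map_f dataf T'c)).
rewrite /dataf /=.
have Lw := Lrep_mul L012 Lt; have Lw' := Lrep_mul L012 Lt'.
set w := compn _ (c3n m T); set w' := compn _ (c3n m T').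
rewrite (Lrep_eq Lw Lw') (negbTE ne).
case E1: (sigw _ _ w != sigw _ _ w') => /=.
  move=> _; move: E1; rewrite /sigw eqseq_cons negb_and.
  case E2: (cycl m w == cycl m w') => /=.
    case/map_neq => u /mapP[U Uc ->] du.
    case: (canon_rep (ulc U Uc)) => P [PS LP _]; right; left; exists P; split => //.
    by rewrite -(Lrep_cycl (Lrep_mul LP Lw)) -(Lrep_cycl (Lrep_mul LP Lw')).
  by move=> _; left; rewrite -(Lrep_cycl Lw) -(Lrep_cycl Lw') E2.
rewrite (Lrep_isinv Lw); case: ifP => // inv; rewrite /distB lhasE => /hasP[U Uc].
rewrite lhasE => /hasP[U' U'c].
case: (canon_rep Uc) => A [AS LA LAi]; case: (canon_rep U'c) => B [BS LB LBi].
rewrite (Lrep_isinv (Lrep_mul LA LB)); case: ifP => // nAB.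
have Lz := Lrep_mul LBi LAi.
rewrite (Lrep_cycl (Lrep_mul Lz Lw)) (Lrep_cycl (Lrep_mul Lz Lw')) -invMg => dz.
right; right; split => //; exists A, B; split => //; by rewrite nAB.
Qed.

Lemma checkB_sound cert : checkB m cert -> forall (d : {perm 'I_m}) D,
  D \in canon m -> Lrep d (c3n m D) ->
  exists X Y, [/\ X \in three_cycles m, Y \in three_cycles m,
     forcedP (mk3 i0 i1 i2) X, forcedP X Y & forcedP Y d].
Proof.
move=> chk d D Dc Ld; move: chk; rewrite /checkB lallE => /allP /(_ _ Dc).
rewrite lhasE => /hasP[[[D0 Xt] Yt] _] /=.
case: ifP => // _; case: ifP => // Xc; case: ifP => // Yc.
case: ifP => // f1; case: ifP => // f2 f3.
case: (canon_rep Xc) => X [XS LX LXi]; case: (canon_rep Yc) => Y [YS LY LYi].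
have L012i : Lrep (mk3 i0 i1 i2)^-1 (c3n m (tinv (0, 1, 2)%N)).
  have -> : tinv (0, 1, 2)%N = (val i0, val i2, val i1) by rewrite v0 v1 v2.
  by rewrite mk3_inv //; apply: Lrep_c3; rewrite /= !inE -!oeq v0 v1 v2.
have Ldi : Lrep d^-1 (c3n m (tinv D)).
  case/canonP: Dc Ld => a [b [c [E u]]] Ld.
  have -> : d = mk3 a b c.
    by apply/eqP; rewrite -(Lrep_eq Ld (Lrep_c3 u)) E.
  rewrite mk3_inv // E; apply: Lrep_c3.
  by case/uniq3: u => ab ac bc; rewrite /= !inE negb_or ac ab eq_sym bc.
exists X, Y; split => //; rewrite /forcedP.
- by move: f1; rewrite /forced (Lrep_cycl (Lrep_mul L012i LX)) (Lrep_cycl (Lrep_mul L012i LXi)).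
- by move: f2; rewrite /forced (Lrep_cycl (Lrep_mul LXi LY)) (Lrep_cycl (Lrep_mul LXi LYi)).
- by move: f3; rewrite /forced (Lrep_cycl (Lrep_mul LYi Ld)) (Lrep_cycl (Lrep_mul LYi Ldi)).
Qed.

End Sound.

Local Open Scope group_scope.

Local Open Scope group_scope.

Lemma embed n (n5 : (4 < n)%N) (i j k : 'I_n) (rest : seq 'I_n) :
  uniq [:: i; j; k] -> (size rest <= 6)%N ->
  exists l : seq 'I_n, [/\ uniq l, (4 < size l < 10)%N, {subset i :: j :: k :: rest <= l} &
     [/\ nth i l 0 = i, nth i l 1 = j & nth i l 2 = k]].
Proof.
move=> u sr.
pose U := undup [seq x <- rest | x \notin [:: i; j; k]].
pose l0 := i :: j :: k :: U.
pose extra := [seq x <- enum 'I_n | x \notin l0].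
have ul0 : uniq l0.
  case/uniq3: u => ij ik jk.
  have nU x : x \in U -> x \notin [:: i; j; k] by rewrite mem_undup mem_filter => /andP[].
  have iU : i \notin U by apply/negP => /nU; rewrite !inE eqxx.
  have jU : j \notin U by apply/negP => /nU; rewrite !inE eqxx ?orbT.
  have kU : k \notin U by apply/negP => /nU; rewrite !inE eqxx ?orbT.
  by rewrite /l0 /= !inE !negb_or ij ik jk iU jU kU undup_uniq.
have sl0 : (size l0 <= 9)%N.
  rewrite /l0 /= !ltnS; apply: leq_trans (size_undup _) _.
  by rewrite size_filter (leq_trans (count_size _ _)).
have se : (n <= size l0 + size extra)%N.
  rewrite -size_cat -{1}(size_enum_ord n); apply: uniq_leq_size; first exact: enum_uniq.
  by move=> x _; rewrite mem_cat; case: (boolP (x \in l0)) => //= xl; rewrite mem_filter xl mem_enum.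
have s3 : (3 <= size l0)%N by [].
exists (l0 ++ take (5 - size l0) extra); split.
- have ue : uniq extra by rewrite filter_uniq // enum_uniq.
  rewrite cat_uniq ul0 /= take_uniq // andbT.
  apply/hasP => [[x /mem_take]]; by rewrite mem_filter => /andP[/negbTE ->].
- rewrite size_cat size_takel; set a := size l0 in sl0 se s3 *; set b := size extra in se *; lia.
- move=> x xin; rewrite mem_cat; apply/orP; left.
  case: (boolP (x \in [:: i; j; k])) => [|xn].
    by rewrite /l0 !inE; case: (x == i); case: (x == j); case: (x == k).
  have xr : x \in rest.
    by move: xin xn; rewrite !inE; case: (x == i); case: (x == j); case: (x == k).
  by rewrite /l0 !inE mem_undup mem_filter xn xr !orbT.
- by rewrite !nth_cat.
Qed.

Lemma rot_canon m (a b c : 'I_m) : uniq [:: a; b; c] -> exists a' b' c' : 'I_m,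
  [/\ uniq [:: a'; b'; c'], (a' < b')%N, (a' < c')%N & mk3 a b c = mk3 a' b' c'].
Proof.
move=> u; have H1 := mk3_cyc u; have H2 := cyc3_rot H1; have H3 := cyc3_rot H2.
case/cyc3P: (H2) => u2 _ _ _ _; case/cyc3P: (H3) => u3 _ _ _ _.
case/uniq3: (u) => ab ac bc; move: ab ac bc; rewrite -!val_eqE /= => ab ac bc.
case: (ltnP a b) => h1; case: (ltnP a c) => h2.
- by exists a, b, c.
- exists c, a, b; split=> //; [lia | lia | exact: cyc3_mk3].
- case: (ltnP b c) => h3.
  + exists b, c, a; split=> //; [lia | exact: cyc3_mk3].
  + exists c, a, b; split=> //; [lia | lia | exact: cyc3_mk3].
- case: (ltnP b c) => h3.
  + exists b, c, a; split=> //; [lia | exact: cyc3_mk3].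
  + exists c, a, b; split=> //; [lia | lia | exact: cyc3_mk3].
Qed.

Local Open Scope group_scope.

Section PushMore.
Variables (n m : nat) (l : m.-tuple 'I_n).
Hypothesis ul : uniq l.
Notation push := (@push n m l ul).

Lemma push1 : push 1 = 1.
Proof.
apply/permP => x; rewrite perm1.
case: (push_cases l x) => [[y ->]|H]; first by rewrite push_phi perm1.
by rewrite push_out.
Qed.

Lemma pushV p : push p^-1 = (push p)^-1.
Proof. by rewrite -[LHS](mulgK (push p)) -pushM mulVg push1 mul1g. Qed.

Lemma pushSE p : (push p \in three_cycles n) = (p \in three_cycles m).
Proof. exact: pushS. Qed.

Lemma push_neq p q : (push p != push q) = (p != q).
Proof. by rewrite (inj_eq (@push_inj _ _ _ ul)). Qed.

Lemma concA_push w w' : concA w w' -> concA (push w) (push w').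
Proof.
case=> [H|[[u [uS H]]|[inv [A [B [AS BS nAB H]]]]]].
- by left; rewrite !pushSE.
- by right; left; exists (push u); rewrite -!pushM !pushSE.
right; right; split.
  by rewrite -pushM -push1 (inj_eq (@push_inj _ _ _ ul)).
exists (push A), (push B); split; rewrite ?pushSE //.
  by rewrite -!pushM -push1 (inj_eq (@push_inj _ _ _ ul)).
by rewrite -!pushM -!pushV -!pushM !pushSE.
Qed.

Lemma forcedP_push C X : forcedP C X -> forcedP (push C) (push X).
Proof. by rewrite /forcedP -!pushV -!pushM !pushSE. Qed.

Lemma pullback (t : {perm 'I_n}) a b c : is_cyc3 t a b c -> a \in l -> b \in l -> c \in l ->
  exists T P, [/\ T \in canon m, Lrep P (c3n m T), P \in three_cycles m & t = push P].
Proof.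
move=> H /tnthP[a0 Ea] /tnthP[b0 Eb] /tnthP[c0 Ec]; subst a b c.
case/cyc3P: (H) => u _ _ _ _.
have u0 : uniq [:: a0; b0; c0] by rewrite -(map_inj_uniq (phi_inj ul)) /=; exact: u.
case: (rot_canon u0) => a1 [b1 [c1 [u1 h1 h2 E]]].
case: (trip_rep u1 h1 h2) => T [Tc LT].
exists T, (mk3 a1 b1 c1); split => //.
  by apply/three_cyclesP; exists a1, b1, c1; apply: mk3_cyc.
by rewrite -E push_mk3 //; apply: cyc3_mk3.
Qed.
End PushMore.

Local Close Scope group_scope.
Definition ulA5 : seq ntrip := [:: (0,1,3); (0,2,4); (0,4,1); (1,3,4); (0,2,3)]%N.
Definition certB5 : seq (ntrip * ntrip * ntrip) := [:: ((0,1,2),(0,1,2),(0,1,2)); ((0,1,3),(0,1,2),(0,1,2)); ((0,1,4),(0,1,2),(0,1,2)); ((0,2,1),(0,1,2),(0,1,2)); ((0,2,3),(0,1,2),(0,1,2)); ((0,2,4),(0,1,2),(0,1,2)); ((0,3,1),(0,1,2),(0,1,2)); ((0,3,2),(0,1,2),(0,1,2)); ((0,3,4),(0,1,2),(0,1,3)); ((0,4,1),(0,1,2),(0,1,2)); ((0,4,2),(0,1,2),(0,1,2)); ((0,4,3),(0,1,2),(0,1,3)); ((1,2,3),(0,1,2),(0,1,2)); ((1,2,4),(0,1,2),(0,1,2)); ((1,3,2),(0,1,2),(0,1,2)); ((1,3,4),(0,1,2),(0,1,3)); ((1,4,2),(0,1,2),(0,1,2)); ((1,4,3),(0,1,2),(0,1,3));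 ((2,3,4),(0,1,2),(0,2,3)); ((2,4,3),(0,1,2),(0,2,3))]%N.
Definition ulA6 : seq ntrip := [:: (0,1,2); (0,2,3); (0,2,4); (0,3,1); (0,4,1); (1,3,2); (1,4,2); (0,2,5); (0,5,1); (3,4,5)]%N.
Definition certB6 : seq (ntrip * ntrip * ntrip) := [:: ((0,1,2),(0,1,2),(0,1,2)); ((0,1,3),(0,1,2),(0,1,2)); ((0,1,4),(0,1,2),(0,1,2)); ((0,1,5),(0,1,2),(0,1,2)); ((0,2,1),(0,1,2),(0,1,2)); ((0,2,3),(0,1,2),(0,1,2)); ((0,2,4),(0,1,2),(0,1,2)); ((0,2,5),(0,1,2),(0,1,2)); ((0,3,1),(0,1,2),(0,1,2)); ((0,3,2),(0,1,2),(0,1,2)); ((0,3,4),(0,1,2),(0,1,3)); ((0,3,5),(0,1,2),(0,1,3)); ((0,4,1),(0,1,2),(0,1,2)); ((0,4,2),(0,1,2),(0,1,2)); ((0,4,3),(0,1,2),(0,1,3)); ((0,4,5),(0,1,2),(0,1,4)); ((0,5,1),(0,1,2),(0,1,2)); ((0,5,2),(0,1,2),(0,1,2)); ((0,5,3),(0,1,2),(0,1,3)); ((0,5,4),(0,1,2),(0,1,4)); ((1,2,3),(0,1,2),(0,1,2)); ((1,2,4),(0,1,2),(0,1,2)); ((1,2,5),(0,1,2),(0,1,2)); ((1,3,2),(0,1,2),(0,1,2)); ((1,3,4),(0,1,2),(0,1,3)); ((1,3,5),(0,1,2),(0,1,3)); ((1,4,2),(0,1,2),(0,1,2)); ((1,4,3),(0,1,2),(0,1,3));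 ((1,4,5),(0,1,2),(0,1,4)); ((1,5,2),(0,1,2),(0,1,2)); ((1,5,3),(0,1,2),(0,1,3)); ((1,5,4),(0,1,2),(0,1,4)); ((2,3,4),(0,1,2),(0,2,3)); ((2,3,5),(0,1,2),(0,2,3)); ((2,4,3),(0,1,2),(0,2,3)); ((2,4,5),(0,1,2),(0,2,4)); ((2,5,3),(0,1,2),(0,2,3)); ((2,5,4),(0,1,2),(0,2,4)); ((3,4,5),(0,1,3),(0,3,4)); ((3,5,4),(0,1,3),(0,3,4))]%N.
Definition ulA7 : seq ntrip := [:: (0,1,2); (0,2,3); (0,2,4); (0,2,5); (0,2,6); (0,3,1); (1,3,2); (0,4,1); (1,4,2); (0,5,1); (1,5,2); (3,4,5); (3,4,6); (3,5,4); (3,5,6); (0,6,1); (3,6,4); (3,6,5); (4,5,6)]%N.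
Definition certB7 : seq (ntrip * ntrip * ntrip) := [:: ((0,1,2),(0,1,2),(0,1,2)); ((0,1,3),(0,1,2),(0,1,2)); ((0,1,4),(0,1,2),(0,1,2)); ((0,1,5),(0,1,2),(0,1,2)); ((0,1,6),(0,1,2),(0,1,2)); ((0,2,1),(0,1,2),(0,1,2)); ((0,2,3),(0,1,2),(0,1,2)); ((0,2,4),(0,1,2),(0,1,2)); ((0,2,5),(0,1,2),(0,1,2)); ((0,2,6),(0,1,2),(0,1,2)); ((0,3,1),(0,1,2),(0,1,2)); ((0,3,2),(0,1,2),(0,1,2)); ((0,3,4),(0,1,2),(0,1,3)); ((0,3,5),(0,1,2),(0,1,3)); ((0,3,6),(0,1,2),(0,1,3)); ((0,4,1),(0,1,2),(0,1,2)); ((0,4,2),(0,1,2),(0,1,2)); ((0,4,3),(0,1,2),(0,1,3)); ((0,4,5),(0,1,2),(0,1,4)); ((0,4,6),(0,1,2),(0,1,4)); ((0,5,1),(0,1,2),(0,1,2)); ((0,5,2),(0,1,2),(0,1,2)); ((0,5,3),(0,1,2),(0,1,3)); ((0,5,4),(0,1,2),(0,1,4)); ((0,5,6),(0,1,2),(0,1,5)); ((0,6,1),(0,1,2),(0,1,2)); ((0,6,2),(0,1,2),(0,1,2)); ((0,6,3),(0,1,2),(0,1,3)); ((0,6,4),(0,1,2),(0,1,4)); ((0,6,5),(0,1,2),(0,1,5)); ((1,2,3),(0,1,2),(0,1,2)); ((1,2,4),(0,1,2),(0,1,2)); ((1,2,5),(0,1,2),(0,1,2)); ((1,2,6),(0,1,2),(0,1,2));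 ((1,3,2),(0,1,2),(0,1,2)); ((1,3,4),(0,1,2),(0,1,3)); ((1,3,5),(0,1,2),(0,1,3)); ((1,3,6),(0,1,2),(0,1,3)); ((1,4,2),(0,1,2),(0,1,2)); ((1,4,3),(0,1,2),(0,1,3)); ((1,4,5),(0,1,2),(0,1,4)); ((1,4,6),(0,1,2),(0,1,4)); ((1,5,2),(0,1,2),(0,1,2)); ((1,5,3),(0,1,2),(0,1,3)); ((1,5,4),(0,1,2),(0,1,4)); ((1,5,6),(0,1,2),(0,1,5)); ((1,6,2),(0,1,2),(0,1,2)); ((1,6,3),(0,1,2),(0,1,3)); ((1,6,4),(0,1,2),(0,1,4)); ((1,6,5),(0,1,2),(0,1,5)); ((2,3,4),(0,1,2),(0,2,3)); ((2,3,5),(0,1,2),(0,2,3)); ((2,3,6),(0,1,2),(0,2,3)); ((2,4,3),(0,1,2),(0,2,3)); ((2,4,5),(0,1,2),(0,2,4)); ((2,4,6),(0,1,2),(0,2,4)); ((2,5,3),(0,1,2),(0,2,3)); ((2,5,4),(0,1,2),(0,2,4)); ((2,5,6),(0,1,2),(0,2,5)); ((2,6,3),(0,1,2),(0,2,3)); ((2,6,4),(0,1,2),(0,2,4)); ((2,6,5),(0,1,2),(0,2,5)); ((3,4,5),(0,1,3),(0,3,4)); ((3,4,6),(0,1,3),(0,3,4)); ((3,5,4),(0,1,3),(0,3,4)); ((3,5,6),(0,1,3),(0,3,5)); ((3,6,4),(0,1,3),(0,3,4)); ((3,6,5),(0,1,3),(0,3,5)); ((4,5,6),(0,1,4),(0,4,5));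 ((4,6,5),(0,1,4),(0,4,5))]%N.
Definition ulA8 : seq ntrip := [:: (0,1,2); (0,2,3); (0,2,4); (0,2,5); (0,2,6); (0,2,7); (0,3,1); (1,3,2); (0,4,1); (1,4,2); (0,5,1); (1,5,2); (0,6,1); (1,6,2); (3,4,5); (3,4,6); (3,4,7); (3,5,4); (3,5,6); (3,5,7); (3,6,4); (3,6,5); (3,6,7); (3,7,4); (3,7,5); (3,7,6); (4,5,6); (4,5,7); (4,6,5); (0,7,1); (4,6,7); (4,7,5); (4,7,6); (5,6,7)]%N.
Definition certB8 : seq (ntrip * ntrip * ntrip) := [:: ((0,1,2),(0,1,2),(0,1,2)); ((0,1,3),(0,1,2),(0,1,2)); ((0,1,4),(0,1,2),(0,1,2)); ((0,1,5),(0,1,2),(0,1,2)); ((0,1,6),(0,1,2),(0,1,2)); ((0,1,7),(0,1,2),(0,1,2)); ((0,2,1),(0,1,2),(0,1,2)); ((0,2,3),(0,1,2),(0,1,2)); ((0,2,4),(0,1,2),(0,1,2)); ((0,2,5),(0,1,2),(0,1,2)); ((0,2,6),(0,1,2),(0,1,2)); ((0,2,7),(0,1,2),(0,1,2)); ((0,3,1),(0,1,2),(0,1,2)); ((0,3,2),(0,1,2),(0,1,2)); ((0,3,4),(0,1,2),(0,1,3)); ((0,3,5),(0,1,2),(0,1,3)); ((0,3,6),(0,1,2),(0,1,3)); ((0,3,7),(0,1,2),(0,1,3)); ((0,4,1),(0,1,2),(0,1,2)); ((0,4,2),(0,1,2),(0,1,2)); ((0,4,3),(0,1,2),(0,1,3));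 ((0,4,5),(0,1,2),(0,1,4)); ((0,4,6),(0,1,2),(0,1,4)); ((0,4,7),(0,1,2),(0,1,4)); ((0,5,1),(0,1,2),(0,1,2)); ((0,5,2),(0,1,2),(0,1,2)); ((0,5,3),(0,1,2),(0,1,3)); ((0,5,4),(0,1,2),(0,1,4)); ((0,5,6),(0,1,2),(0,1,5)); ((0,5,7),(0,1,2),(0,1,5)); ((0,6,1),(0,1,2),(0,1,2)); ((0,6,2),(0,1,2),(0,1,2)); ((0,6,3),(0,1,2),(0,1,3)); ((0,6,4),(0,1,2),(0,1,4)); ((0,6,5),(0,1,2),(0,1,5)); ((0,6,7),(0,1,2),(0,1,6)); ((0,7,1),(0,1,2),(0,1,2)); ((0,7,2),(0,1,2),(0,1,2)); ((0,7,3),(0,1,2),(0,1,3)); ((0,7,4),(0,1,2),(0,1,4)); ((0,7,5),(0,1,2),(0,1,5)); ((0,7,6),(0,1,2),(0,1,6)); ((1,2,3),(0,1,2),(0,1,2)); ((1,2,4),(0,1,2),(0,1,2)); ((1,2,5),(0,1,2),(0,1,2)); ((1,2,6),(0,1,2),(0,1,2)); ((1,2,7),(0,1,2),(0,1,2)); ((1,3,2),(0,1,2),(0,1,2)); ((1,3,4),(0,1,2),(0,1,3)); ((1,3,5),(0,1,2),(0,1,3)); ((1,3,6),(0,1,2),(0,1,3)); ((1,3,7),(0,1,2),(0,1,3)); ((1,4,2),(0,1,2),(0,1,2)); ((1,4,3),(0,1,2),(0,1,3)); ((1,4,5),(0,1,2),(0,1,4)); ((1,4,6),(0,1,2),(0,1,4));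 ((1,4,7),(0,1,2),(0,1,4)); ((1,5,2),(0,1,2),(0,1,2)); ((1,5,3),(0,1,2),(0,1,3)); ((1,5,4),(0,1,2),(0,1,4)); ((1,5,6),(0,1,2),(0,1,5)); ((1,5,7),(0,1,2),(0,1,5)); ((1,6,2),(0,1,2),(0,1,2)); ((1,6,3),(0,1,2),(0,1,3)); ((1,6,4),(0,1,2),(0,1,4)); ((1,6,5),(0,1,2),(0,1,5)); ((1,6,7),(0,1,2),(0,1,6)); ((1,7,2),(0,1,2),(0,1,2)); ((1,7,3),(0,1,2),(0,1,3)); ((1,7,4),(0,1,2),(0,1,4)); ((1,7,5),(0,1,2),(0,1,5)); ((1,7,6),(0,1,2),(0,1,6)); ((2,3,4),(0,1,2),(0,2,3)); ((2,3,5),(0,1,2),(0,2,3)); ((2,3,6),(0,1,2),(0,2,3)); ((2,3,7),(0,1,2),(0,2,3)); ((2,4,3),(0,1,2),(0,2,3)); ((2,4,5),(0,1,2),(0,2,4)); ((2,4,6),(0,1,2),(0,2,4)); ((2,4,7),(0,1,2),(0,2,4)); ((2,5,3),(0,1,2),(0,2,3)); ((2,5,4),(0,1,2),(0,2,4)); ((2,5,6),(0,1,2),(0,2,5)); ((2,5,7),(0,1,2),(0,2,5)); ((2,6,3),(0,1,2),(0,2,3)); ((2,6,4),(0,1,2),(0,2,4)); ((2,6,5),(0,1,2),(0,2,5)); ((2,6,7),(0,1,2),(0,2,6)); ((2,7,3),(0,1,2),(0,2,3)); ((2,7,4),(0,1,2),(0,2,4)); ((2,7,5),(0,1,2),(0,2,5));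 ((2,7,6),(0,1,2),(0,2,6)); ((3,4,5),(0,1,3),(0,3,4)); ((3,4,6),(0,1,3),(0,3,4)); ((3,4,7),(0,1,3),(0,3,4)); ((3,5,4),(0,1,3),(0,3,4)); ((3,5,6),(0,1,3),(0,3,5)); ((3,5,7),(0,1,3),(0,3,5)); ((3,6,4),(0,1,3),(0,3,4)); ((3,6,5),(0,1,3),(0,3,5)); ((3,6,7),(0,1,3),(0,3,6)); ((3,7,4),(0,1,3),(0,3,4)); ((3,7,5),(0,1,3),(0,3,5)); ((3,7,6),(0,1,3),(0,3,6)); ((4,5,6),(0,1,4),(0,4,5)); ((4,5,7),(0,1,4),(0,4,5)); ((4,6,5),(0,1,4),(0,4,5)); ((4,6,7),(0,1,4),(0,4,6)); ((4,7,5),(0,1,4),(0,4,5)); ((4,7,6),(0,1,4),(0,4,6)); ((5,6,7),(0,1,5),(0,5,6)); ((5,7,6),(0,1,5),(0,5,6))]%N.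
Definition ulA9 : seq ntrip := [:: (0,1,2); (0,2,3); (0,2,4); (0,2,5); (0,2,6); (0,2,7); (0,2,8); (0,3,1); (1,3,2); (0,4,1); (1,4,2); (0,5,1); (1,5,2); (0,6,1); (1,6,2); (0,7,1); (1,7,2); (3,4,5); (3,4,6); (3,4,7); (3,4,8); (3,5,4); (3,5,6); (3,5,7); (3,5,8); (3,6,4); (3,6,5); (3,6,7); (3,6,8); (3,7,4); (3,7,5); (3,7,6); (3,7,8); (3,8,4); (3,8,5); (3,8,6); (3,8,7); (4,5,6); (4,5,7); (4,5,8); (4,6,5); (4,6,7); (4,6,8); (4,7,5); (4,7,6); (4,7,8); (4,8,5); (4,8,6); (4,8,7); (5,6,7); (5,6,8); (0,8,1); (5,7,6); (5,7,8); (5,8,6); (5,8,7); (6,7,8)]%N.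
Definition certB9 : seq (ntrip * ntrip * ntrip) := [:: ((0,1,2),(0,1,2),(0,1,2)); ((0,1,3),(0,1,2),(0,1,2)); ((0,1,4),(0,1,2),(0,1,2)); ((0,1,5),(0,1,2),(0,1,2)); ((0,1,6),(0,1,2),(0,1,2)); ((0,1,7),(0,1,2),(0,1,2)); ((0,1,8),(0,1,2),(0,1,2)); ((0,2,1),(0,1,2),(0,1,2)); ((0,2,3),(0,1,2),(0,1,2)); ((0,2,4),(0,1,2),(0,1,2)); ((0,2,5),(0,1,2),(0,1,2)); ((0,2,6),(0,1,2),(0,1,2)); ((0,2,7),(0,1,2),(0,1,2)); ((0,2,8),(0,1,2),(0,1,2)); ((0,3,1),(0,1,2),(0,1,2)); ((0,3,2),(0,1,2),(0,1,2)); ((0,3,4),(0,1,2),(0,1,3)); ((0,3,5),(0,1,2),(0,1,3)); ((0,3,6),(0,1,2),(0,1,3)); ((0,3,7),(0,1,2),(0,1,3)); ((0,3,8),(0,1,2),(0,1,3)); ((0,4,1),(0,1,2),(0,1,2)); ((0,4,2),(0,1,2),(0,1,2)); ((0,4,3),(0,1,2),(0,1,3)); ((0,4,5),(0,1,2),(0,1,4)); ((0,4,6),(0,1,2),(0,1,4)); ((0,4,7),(0,1,2),(0,1,4)); ((0,4,8),(0,1,2),(0,1,4)); ((0,5,1),(0,1,2),(0,1,2)); ((0,5,2),(0,1,2),(0,1,2)); ((0,5,3),(0,1,2),(0,1,3)); ((0,5,4),(0,1,2),(0,1,4)); ((0,5,6),(0,1,2),(0,1,5)); ((0,5,7),(0,1,2),(0,1,5));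 ((0,5,8),(0,1,2),(0,1,5)); ((0,6,1),(0,1,2),(0,1,2)); ((0,6,2),(0,1,2),(0,1,2)); ((0,6,3),(0,1,2),(0,1,3)); ((0,6,4),(0,1,2),(0,1,4)); ((0,6,5),(0,1,2),(0,1,5)); ((0,6,7),(0,1,2),(0,1,6)); ((0,6,8),(0,1,2),(0,1,6)); ((0,7,1),(0,1,2),(0,1,2)); ((0,7,2),(0,1,2),(0,1,2)); ((0,7,3),(0,1,2),(0,1,3)); ((0,7,4),(0,1,2),(0,1,4)); ((0,7,5),(0,1,2),(0,1,5)); ((0,7,6),(0,1,2),(0,1,6)); ((0,7,8),(0,1,2),(0,1,7)); ((0,8,1),(0,1,2),(0,1,2)); ((0,8,2),(0,1,2),(0,1,2)); ((0,8,3),(0,1,2),(0,1,3)); ((0,8,4),(0,1,2),(0,1,4)); ((0,8,5),(0,1,2),(0,1,5)); ((0,8,6),(0,1,2),(0,1,6)); ((0,8,7),(0,1,2),(0,1,7)); ((1,2,3),(0,1,2),(0,1,2)); ((1,2,4),(0,1,2),(0,1,2)); ((1,2,5),(0,1,2),(0,1,2)); ((1,2,6),(0,1,2),(0,1,2)); ((1,2,7),(0,1,2),(0,1,2)); ((1,2,8),(0,1,2),(0,1,2)); ((1,3,2),(0,1,2),(0,1,2)); ((1,3,4),(0,1,2),(0,1,3)); ((1,3,5),(0,1,2),(0,1,3)); ((1,3,6),(0,1,2),(0,1,3)); ((1,3,7),(0,1,2),(0,1,3)); ((1,3,8),(0,1,2),(0,1,3)); ((1,4,2),(0,1,2),(0,1,2));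 ((1,4,3),(0,1,2),(0,1,3)); ((1,4,5),(0,1,2),(0,1,4)); ((1,4,6),(0,1,2),(0,1,4)); ((1,4,7),(0,1,2),(0,1,4)); ((1,4,8),(0,1,2),(0,1,4)); ((1,5,2),(0,1,2),(0,1,2)); ((1,5,3),(0,1,2),(0,1,3)); ((1,5,4),(0,1,2),(0,1,4)); ((1,5,6),(0,1,2),(0,1,5)); ((1,5,7),(0,1,2),(0,1,5)); ((1,5,8),(0,1,2),(0,1,5)); ((1,6,2),(0,1,2),(0,1,2)); ((1,6,3),(0,1,2),(0,1,3)); ((1,6,4),(0,1,2),(0,1,4)); ((1,6,5),(0,1,2),(0,1,5)); ((1,6,7),(0,1,2),(0,1,6)); ((1,6,8),(0,1,2),(0,1,6)); ((1,7,2),(0,1,2),(0,1,2)); ((1,7,3),(0,1,2),(0,1,3)); ((1,7,4),(0,1,2),(0,1,4)); ((1,7,5),(0,1,2),(0,1,5)); ((1,7,6),(0,1,2),(0,1,6)); ((1,7,8),(0,1,2),(0,1,7)); ((1,8,2),(0,1,2),(0,1,2)); ((1,8,3),(0,1,2),(0,1,3)); ((1,8,4),(0,1,2),(0,1,4)); ((1,8,5),(0,1,2),(0,1,5)); ((1,8,6),(0,1,2),(0,1,6)); ((1,8,7),(0,1,2),(0,1,7)); ((2,3,4),(0,1,2),(0,2,3)); ((2,3,5),(0,1,2),(0,2,3)); ((2,3,6),(0,1,2),(0,2,3)); ((2,3,7),(0,1,2),(0,2,3)); ((2,3,8),(0,1,2),(0,2,3)); ((2,4,3),(0,1,2),(0,2,3));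 ((2,4,5),(0,1,2),(0,2,4)); ((2,4,6),(0,1,2),(0,2,4)); ((2,4,7),(0,1,2),(0,2,4)); ((2,4,8),(0,1,2),(0,2,4)); ((2,5,3),(0,1,2),(0,2,3)); ((2,5,4),(0,1,2),(0,2,4)); ((2,5,6),(0,1,2),(0,2,5)); ((2,5,7),(0,1,2),(0,2,5)); ((2,5,8),(0,1,2),(0,2,5)); ((2,6,3),(0,1,2),(0,2,3)); ((2,6,4),(0,1,2),(0,2,4)); ((2,6,5),(0,1,2),(0,2,5)); ((2,6,7),(0,1,2),(0,2,6)); ((2,6,8),(0,1,2),(0,2,6)); ((2,7,3),(0,1,2),(0,2,3)); ((2,7,4),(0,1,2),(0,2,4)); ((2,7,5),(0,1,2),(0,2,5)); ((2,7,6),(0,1,2),(0,2,6)); ((2,7,8),(0,1,2),(0,2,7)); ((2,8,3),(0,1,2),(0,2,3)); ((2,8,4),(0,1,2),(0,2,4)); ((2,8,5),(0,1,2),(0,2,5)); ((2,8,6),(0,1,2),(0,2,6)); ((2,8,7),(0,1,2),(0,2,7)); ((3,4,5),(0,1,3),(0,3,4)); ((3,4,6),(0,1,3),(0,3,4)); ((3,4,7),(0,1,3),(0,3,4)); ((3,4,8),(0,1,3),(0,3,4)); ((3,5,4),(0,1,3),(0,3,4)); ((3,5,6),(0,1,3),(0,3,5)); ((3,5,7),(0,1,3),(0,3,5)); ((3,5,8),(0,1,3),(0,3,5)); ((3,6,4),(0,1,3),(0,3,4)); ((3,6,5),(0,1,3),(0,3,5)); ((3,6,7),(0,1,3),(0,3,6));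 ((3,6,8),(0,1,3),(0,3,6)); ((3,7,4),(0,1,3),(0,3,4)); ((3,7,5),(0,1,3),(0,3,5)); ((3,7,6),(0,1,3),(0,3,6)); ((3,7,8),(0,1,3),(0,3,7)); ((3,8,4),(0,1,3),(0,3,4)); ((3,8,5),(0,1,3),(0,3,5)); ((3,8,6),(0,1,3),(0,3,6)); ((3,8,7),(0,1,3),(0,3,7)); ((4,5,6),(0,1,4),(0,4,5)); ((4,5,7),(0,1,4),(0,4,5)); ((4,5,8),(0,1,4),(0,4,5)); ((4,6,5),(0,1,4),(0,4,5)); ((4,6,7),(0,1,4),(0,4,6)); ((4,6,8),(0,1,4),(0,4,6)); ((4,7,5),(0,1,4),(0,4,5)); ((4,7,6),(0,1,4),(0,4,6)); ((4,7,8),(0,1,4),(0,4,7)); ((4,8,5),(0,1,4),(0,4,5)); ((4,8,6),(0,1,4),(0,4,6)); ((4,8,7),(0,1,4),(0,4,7)); ((5,6,7),(0,1,5),(0,5,6)); ((5,6,8),(0,1,5),(0,5,6)); ((5,7,6),(0,1,5),(0,5,6)); ((5,7,8),(0,1,5),(0,5,7)); ((5,8,6),(0,1,5),(0,5,6)); ((5,8,7),(0,1,5),(0,5,7)); ((6,7,8),(0,1,6),(0,6,7)); ((6,8,7),(0,1,6),(0,6,7))]%N.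
Local Open Scope group_scope.
Lemma cA5 : checkA 5 ulA5. Proof. by vm_compute. Qed.
Lemma cA6 : checkA 6 ulA6. Proof. by vm_compute. Qed.
Lemma cA7 : checkA 7 ulA7. Proof. by vm_compute. Qed.
Lemma cA8 : checkA 8 ulA8. Proof. by vm_compute. Qed.
Lemma cA9 : checkA 9 ulA9. Proof. by vm_compute. Qed.
Lemma cB5 : checkB 5 certB5. Proof. by vm_compute. Qed.
Lemma cB6 : checkB 6 certB6. Proof. by vm_compute. Qed.
Lemma cB7 : checkB 7 certB7. Proof. by vm_compute. Qed.
Lemma cB8 : checkB 8 certB8. Proof. by vm_compute. Qed.
Lemma cB9 : checkB 9 certB9. Proof. by vm_compute. Qed.

Lemma checkA_all m : (4 < m < 10)%N -> exists ul, checkA m ul.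
Proof.
case/andP=> h1 h2.
have [->|[->|[->|[->|->]]]] : (m = 5 \/ m = 6 \/ m = 7 \/ m = 8 \/ m = 9)%N by lia.
- exists ulA5; exact: cA5.
- exists ulA6; exact: cA6.
- exists ulA7; exact: cA7.
- exists ulA8; exact: cA8.
- exists ulA9; exact: cA9.
Qed.
Lemma checkB_all m : (4 < m < 10)%N -> exists c, checkB m c.
Proof.
case/andP=> h1 h2.
have [->|[->|[->|[->|->]]]] : (m = 5 \/ m = 6 \/ m = 7 \/ m = 8 \/ m = 9)%N by lia.
- exists certB5; exact: cB5.
- exists certB6; exact: cB6.
- exists certB7; exact: cB7.
- exists certB8; exact: cB8.
- exists certB9; exact: cB9.
Qed.

Local Open Scope group_scope.

Section Trans.
Variable n : nat.
Hypothesis n5 : (4 < n)%N.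
Notation S := (three_cycles n).

Lemma setup (s : {perm 'I_n}) i j k (rest : seq 'I_n) : is_cyc3 s i j k -> (size rest <= 6)%N ->
  exists m (L : m.-tuple 'I_n) (uL : uniq L) (i0 i1 i2 : 'I_m),
   [/\ (4 < m < 10)%N, {subset rest <= L}, [/\ val i0 = 0%N, val i1 = 1%N & val i2 = 2%N] &
       s = push uL (mk3 i0 i1 i2)].
Proof.
move=> Hs sr; case/cyc3P: (Hs) => u _ _ _ _.
case: (embed n5 u sr) => l [ul sz sub [e0 e1 e2]].
have uL : uniq (in_tuple l) by [].
have h0 : (0 < size l)%N by lia.
have h1 : (1 < size l)%N by lia.
have h2 : (2 < size l)%N by lia.
exists (size l), (in_tuple l), uL, (Ordinal h0), (Ordinal h1), (Ordinal h2); split => //.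
  by move=> x xr; apply: sub; rewrite !inE xr !orbT.
rewrite push_mk3 /=; last done.
rewrite /phi !(tnth_nth i) /= e0 e1 e2; exact: cyc3_mk3.
Qed.

Lemma transA (s t t' : {perm 'I_n}) : s \in S -> t \in S -> t' \in S -> s * t != s * t' ->
  concA (s * t) (s * t').
Proof.
case/three_cyclesP=> i [j [k Hs]] /three_cyclesP[a [b [c Ht]]] /three_cyclesP[a' [b' [c' Ht']]] ne.
case: (@setup s i j k [:: a; b; c; a'; b'; c'] Hs erefl) => m [L [uL [i0 [i1 [i2 [sz sub [v0 v1 v2] Es]]]]]].
have mem x : x \in [:: a; b; c; a'; b'; c'] -> x \in L by apply: sub.
case: (pullback uL Ht (mem _ _) (mem _ _) (mem _ _)); rewrite ?inE ?eqxx ?orbT //.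
move=> T [P [Tc LP PS Et]].
case: (pullback uL Ht' (mem _ _) (mem _ _) (mem _ _)); rewrite ?inE ?eqxx ?orbT //.
move=> T' [P' [T'c LP' P'S Et']].
rewrite Es Et Et' -!pushM; apply: concA_push.
case: (checkA_all sz) => ul chk.
apply: (checkA_sound v0 v1 v2 chk Tc T'c LP LP').
by move: ne; rewrite Es Et Et' -!pushM push_neq.
Qed.

Lemma transB (c d : {perm 'I_n}) : c \in S -> d \in S ->
  exists X Y, [/\ X \in S, Y \in S, forcedP c X, forcedP X Y & forcedP Y d].
Proof.
case/three_cyclesP=> i [j [k Hc]] /three_cyclesP[a [b [e Hd]]].
case: (@setup c i j k [:: a; b; e] Hc erefl) => m [L [uL [i0 [i1 [i2 [sz sub [v0 v1 v2] Ec]]]]]].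
have mem x : x \in [:: a; b; e] -> x \in L by apply: sub.
case: (pullback uL Hd (mem _ _) (mem _ _) (mem _ _)); rewrite ?inE ?eqxx ?orbT //.
move=> D [P [Dc LP PS Ed]].
case: (checkB_all sz) => cert chk.
case: (checkB_sound v0 v1 v2 chk Dc LP) => X [Y [XS YS f1 f2 f3]].
exists (push uL X), (push uL Y); split; rewrite ?pushS // ?Ec ?Ed; exact: forcedP_push.
Qed.
End Trans.

Local Open Scope group_scope.

Section Main.
Variable n : nat.
Hypothesis n5 : (4 < n)%N.
Notation S := (three_cycles n).
Notation V := (vert n).

Lemma S_invE (p : {perm 'I_n}) : (p^-1 \in S) = (p \in S).
Proof. by apply/idP/idP => /S_inv //; rewrite invgK. Qed.

Lemma S_conjE (p g : {perm 'I_n}) : (p ^ g \in S) = (p \in S).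
Proof. by apply/idP/idP => [/(S_conj g^-1)|/S_conj //]; rewrite conjgK. Qed.

Section Key.
Variable G : V -> V.
Hypotheses (pG : preserves G) (Ge : G (vid n) = vid n) (GS : forall x, val x \in S -> G x = x).

Lemma key (x y : V) (xS : val x \in S) (yS : val y \in S) :
  (val x * val y * (val x * val y) == 1 -> forall A B (AS : A \in S) (BS : B \in S),
     A * B * (A * B) != 1 -> G (vmul (vS AS) (vS BS)) = vmul (vS AS) (vS BS)) ->
  G (vmul x y) = vmul x y.
Proof.
move=> h3; set w := G (vmul x y).
have ax : adj x w by rewrite /w -{1}(GS xS) pG /adj /= mulKg.
set t' := (val x)^-1 * val w.
have Ew : val w = val x * t' by rewrite /t' mulKVg.
apply: vinj; apply/eqP; apply/negPn/negP => ne.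
have ne' : val x * val y != val x * t' by rewrite -Ew eq_sym.
have := transA n5 xS yS ax ne'.
case=> [H|[[u [uS H]]|[inv [A [B [AS BS nAB H]]]]]].
- have := pG (vid n) (vmul x y); rewrite Ge -/w /adj /= invg1 !mul1g Ew.
  by move=> E; move: H; rewrite E eqxx.
- have uiS : u^-1 \in S by apply: S_inv.
  have := pG (vS uiS) (vmul x y); rewrite (GS (x := vS uiS)) // -/w /adj /= invgK Ew.
  by move=> E; move: H; rewrite E eqxx.
- have := pG (vmul (vS AS) (vS BS)) (vmul x y).
  rewrite (h3 inv A B AS BS nAB) -/w /adj /= Ew.
  by move=> E; move: H; rewrite E eqxx.
Qed.

Lemma core_G : forall x y, val x \in S -> val y \in S -> G (vmul x y) = vmul x y.
Proof.
have st1 : forall (x y : V), val x \in S -> val y \in S ->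
    val x * val y * (val x * val y) != 1 -> G (vmul x y) = vmul x y.
  move=> x y xS yS ni; apply: key => // E; by rewrite E in ni.
move=> x y xS yS; apply: key => // _ A B AS BS nAB; exact: st1.
Qed.
End Key.

Lemma coreP : core_prop n.
Proof. move=> G pG Ge GS; exact: core_G. Qed.

Lemma cyc_neq_inv (s : {perm 'I_n}) : s \in S -> s != s^-1.
Proof.
case/three_cyclesP => i [j [k H]]; case/cyc3P: (H) => /uniq3[ij ik jk] si sj sk _.
apply/eqP => E; have : s (s i) = i by rewrite {1}E permK.
by rewrite si sj => /eqP; rewrite eq_sym (negbTE ik).
Qed.

Lemma Kpres (g : {perm V}) : g \in Kker n -> preserves g.
Proof. by rewrite !inE => /andP[/andP[/forallP H _] _] x y; apply/eqP; move/forallP: (H x). Qed.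

Lemma Kfix (g : {perm V}) : g \in Kker n -> g (vid n) = vid n.
Proof. by rewrite !inE => /andP[/andP[_ /eqP]]. Qed.

Lemma K_S (g : {perm V}) (v : V) : g \in Kker n -> val v \in S ->
  val (g v) = val v \/ val (g v) = (val v)^-1.
Proof.
move=> gK /three_cyclesP[a [b [c H]]]; case/cyc3P: (H) => u _ _ _ _.
case: (rot_canon u) => a' [b' [c' [u' h1 h2 E]]].
have Ev : val v = mk3 a' b' c' by rewrite -E; exact: cyc3_mk3.
have Evi : (val v)^-1 = mk3 a' c' b' by rewrite Ev mk3_inv.
case/uniq3: (u') => ab ac bc.
have u'' : uniq [:: a'; c'; b'] by rewrite /= !inE negb_or ac ab eq_sym bc.
move: gK; rewrite inE => /andP[_ /forallP Hd].
have memD (i j k : 'I_n) : (i < j < k)%N -> v \in Delta i j k -> g v \in Delta i j k.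
  move=> o vD; move/forallP: (Hd i) => /(_ j) /forallP /(_ k) /implyP /(_ o) /eqP <-.
  exact: imset_f.
case: (ltnP b' c') => h3.
- have : g v \in Delta a' b' c'.
    apply: memD; first by rewrite h1 h3.
    by rewrite inE Ev mk3_cyc.
  rewrite inE => /orP[/cyc3_mk3|/cyc3_mk3] ->; [left | right] => //.
- have h3' : (c' < b')%N by rewrite ltn_neqAle h3 andbT eq_sym; exact: bc.
  have : g v \in Delta a' c' b'.
    apply: memD; first by rewrite h2 h3'.
    by rewrite inE Ev mk3_cyc ?orbT.
  rewrite inE => /orP[/cyc3_mk3|/cyc3_mk3] ->; [right | left] => //.
Qed.

Lemma forced_bit (g : {perm V}) (C X : V) : g \in Kker n -> val C \in S -> val X \in S ->
  forcedP (val C) (val X) -> (val (g C) == val C) = (val (g X) == val X).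
Proof.
move=> gK CS XS f; have pg := Kpres gK.
have nC := cyc_neq_inv CS; have nX := cyc_neq_inv XS.
have := pg C X; rewrite /adj.
case: (K_S gK CS) => ->; case: (K_S gK XS) => -> E.
- by rewrite !eqxx.
- by move: f; rewrite /forcedP E !eqxx.
- move: E; rewrite invgK => E.
  have E2 : (val C * val X \in S) = ((val C)^-1 * (val X)^-1 \in S).
    by rewrite -[val C * val X]invgK S_invE invMg -(S_conjE _ (val X)^-1) /conjg invgK !mulgA mulgV mul1g.
  by move: f; rewrite /forcedP -E2 E !eqxx.
- by rewrite eq_sym (negbTE nC) eq_sym (negbTE nX).
Qed.

Lemma bit_const (g : {perm V}) (C D : V) : g \in Kker n -> val C \in S -> val D \in S ->
  (val (g C) == val C) = (val (g D) == val D).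
Proof.
move=> gK CS DS; case: (transB n5 CS DS) => X [Y [XS YS f1 f2 f3]].
rewrite (forced_bit (X := vS XS) gK) // (forced_bit (C := vS XS) (X := vS YS) gK) //.
exact: (forced_bit (C := vS YS) gK).
Qed.

Lemma K_eq (g1 g2 : {perm V}) (C : V) : g1 \in Kker n -> g2 \in Kker n -> val C \in S ->
  (val (g1 C) == val C) = (val (g2 C) == val C) -> g1 = g2.
Proof.
move=> g1K g2K CS bC.
have agree v : val v \in S -> g1 v = g2 v.
  move=> vS; apply: vinj.
  have b : (val (g1 v) == val v) = (val (g2 v) == val v).
    by rewrite -(bit_const g1K CS vS) -(bit_const g2K CS vS).
  have nv := cyc_neq_inv vS.
  move: b; case: (K_S g1K vS) => ->; case: (K_S g2K vS) => -> //.
  - by rewrite eqxx eq_sym (negbTE nv).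
  - by rewrite eqxx eq_sym (negbTE nv).
pose F v := g2^-1 (g1 v).
have pF : preserves F.
  move=> x y; rewrite /F -(Kpres g2K) !permKV; exact: (Kpres g1K x y).
have Fe : F (vid n) = vid n.
  by rewrite /F (Kfix g1K) -{1}(Kfix g2K) permK.
have FS v : val v \in S -> F v = v by move=> vS; rewrite /F agree // permK.
have := fix_all coreP n5 pF Fe FS => H.
apply/permP => v; move: (H v); rewrite /F => E.
by rewrite -[g1 v](permKV g2) E.
Qed.

End Main.

Theorem lemma3p6 (n : nat) : (5 <= n)%N -> (#|Kker n| <= 2)%N.
Proof.
move=> n5.
have n0 : (0 < n)%N by apply: leq_trans n5.
have n1 : (1 < n)%N by apply: leq_trans n5.
have n2 : (2 < n)%N by apply: leq_trans n5.
pose i0 := Ordinal n0; pose i1 := Ordinal n1; pose i2 := Ordinal n2.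
have u : uniq [:: i0; i1; i2] by [].
have cS : mk3 i0 i1 i2 \in three_cycles n.
  by apply/three_cyclesP; exists i0, i1, i2; apply: mk3_cyc.
pose C := vS cS.
have inj : {in Kker n &, injective (fun g : {perm vert n} => val (g C) == val C)}.
  by move=> g1 g2 g1K g2K E; exact: (@K_eq n n5 g1 g2 C g1K g2K cS E).
rewrite -(card_in_imset inj); apply: leq_trans (max_card _) _; by rewrite card_bool.
Qed.
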